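(* Let $\mathcal{X}$ be a compact metric space, $\kappa\colon\mathcal{X}\times\mathcal{X}\to[0,1]$ a continuous positive definite kernel with reproducing kernel Hilbert space $\mathcal{H}$, $F$ a Borel probability measure on $\mathcal{X}$, $X_1,\dots,X_n\in\mathcal{X}$ the in-sample latent positions, $\rho_n\in(0,1)$, and $d\ge1$. Let $\hat{\mathcal{P}}_d$ be the orthogonal projection in $\mathcal{H}$ onto the subspace spanned by the eigenfunctions corresponding to the $d$ largest eigenvalues of the operator $\mathcal{K}_{\mathcal{H},n}$ defined in the context. Then there is an isometric isomorphism $\imath$ from the $d$-dimensional subspace $\hat{\mathcal{P}}_d\mathcal{H}$ onto $\mathbb{R}^d$ such that for $X\in\mathcal{X}$, $$\rho_n^{-1/2}\tilde{\mathbf{Z}}^{\dagger}\mathbb{E}[\boldsymbol{\xi}]=\imath\bigl(\hat{\mathcal{P}}_d\kappa(\cdot,X)\bigr),$$ where $\mathbb{E}[\boldsymbol{\xi}]=(\rho_n\kappa(X,X_i))_{i=1}^n$.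
   Context: $\mathbf{K}=(\rho_n\kappa(X_i,X_j))_{i,j=1}^n$; $\mathbf{S}_{\mathbf{K}}$ is the $d\times d$ diagonal matrix of the $d$ largest eigenvalues of $\mathbf{K}$ (assumed positive), $\mathbf{U}_{\mathbf{K}}$ the $n\times d$ matrix of corresponding orthonormal eigenvectors, $\tilde{\mathbf{Z}}=\mathbf{U}_{\mathbf{K}}\mathbf{S}_{\mathbf{K}}^{1/2}$ and $\tilde{\mathbf{Z}}^\dagger=(\tilde{\mathbf{Z}}^T\tilde{\mathbf{Z}})^{-1}\tilde{\mathbf{Z}}^T=\mathbf{S}_{\mathbf{K}}^{-1/2}\mathbf{U}_{\mathbf{K}}^T$ its Moore–Penrose pseudo-inverse. The operator $\mathcal{K}_{\mathcal{H},n}\colon\mathcal{H}\to\mathcal{H}$ is $\mathcal{K}_{\mathcal{H},n}\eta=\frac1n\sum_{i=1}^n\langle\eta,\kappa(\cdot,X_i)\rangle_{\mathcal{H}}\kappa(\cdot,X_i)$; it is positive, self-adjoint and of finite rank. $\boldsymbol{\xi}$ is a vector of independent Bernoulli variables with $\Pr[\xi_i=1]=\rho_n\kappa(X,X_i)$.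
   Formalization: The d largest eigenvalues of $\mathbf{K}$ are strictly separated from the rest: every eigenvector of $\mathbf{K}$ orthogonal to the columns of $\mathbf{U}_{\mathbf{K}}$ has eigenvalue strictly below each diagonal entry of $\mathbf{S}_{\mathbf{K}}$. The statement above fails without it. *)

(* Defs.v *)
From HB Require Import structures.
From mathcomp Require Import all_boot all_order all_algebra.
From mathcomp Require Import all_classical all_reals all_analysis.
Set Implicit Arguments. Unset Strict Implicit. Unset Printing Implicit Defensive.
Import Order.TTheory GRing.Theory Num.Theory.
Local Open Scope ring_scope.

Definition pos_def_kernel (R : realType) (T : Type) (kappa : T -> T -> R) :=
  (forall x y, kappa x y = kappa y x) /\
  (forall (m : nat) (c : 'I_m -> R) (x : 'I_m -> T),
      0 <= \sum_(i < m) \sum_(j < m) c i * c j * kappa (x i) (x j)).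

Definition inner_product (R : realType) (H : lmodType R) (ip : H -> H -> R) :=
  (forall (c : R) a b h, ip (c *: a + b) h = c * ip a h + ip b h) /\
  (forall a b, ip a b = ip b a) /\
  (forall a, a != 0 -> 0 < ip a a).

(* (H, ip) is the RKHS of kappa, kfeat x being kappa(.,x):
   reproducing property <k_x, k_y> = kappa x y, and elements of H are
   determined by their evaluations h(x) = <h, k_x>. *)
Definition rkhs_feature (R : realType) (H : lmodType R) (T : Type)
    (ip : H -> H -> R) (kappa : T -> T -> R) (kfeat : T -> H) :=
  (forall x y, ip (kfeat x) (kfeat y) = kappa x y) /\
  (forall h, (forall x, ip h (kfeat x) = 0) -> h = 0).

Definition gram_K (R : realType) (T : Type) (n : nat) (rho : R)
    (kappa : T -> T -> R) (X : 'I_n -> T) : 'M[R]_n :=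
  \matrix_(i, j) (rho * kappa (X i) (X j)).

(* U (n x d, orthonormal columns) and s (diagonal of S_K) are the
   eigenvectors / eigenvalues of K for its d largest eigenvalues,
   which are positive, sorted decreasingly, and separated from the rest. *)
Definition top_eigen (R : realType) (n d : nat) (K : 'M[R]_n)
    (U : 'M[R]_(n, d)) (s : 'rV[R]_d) :=
  [/\ U^T *m U = 1%:M,
      K *m U = U *m diag_mx s,
      (forall j, 0 < s 0 j),
      (forall i j : 'I_d, (i <= j)%N -> s 0 j <= s 0 i) &
      (forall (v : 'cV[R]_n) (mu : R), v != 0 -> K *m v = mu *: v ->
          U^T *m v = 0 -> forall j, mu < s 0 j)].

Definition Ztilde (R : realType) (n d : nat) (U : 'M[R]_(n, d)) (s : 'rV[R]_d)
  : 'M[R]_(n, d) := U *m diag_mx (map_mx Num.sqrt s).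

Definition mp_pinv (R : realType) (n d : nat) (Z : 'M[R]_(n, d)) : 'M[R]_(d, n) :=
  invmx (Z^T *m Z) *m Z^T.

Definition Exi (R : realType) (T : Type) (n : nat) (rho : R)
    (kappa : T -> T -> R) (X : 'I_n -> T) (x : T) : 'cV[R]_n :=
  \col_i (rho * kappa x (X i)).

Definition KHn (R : realType) (H : lmodType R) (T : Type) (n : nat)
    (ip : H -> H -> R) (kfeat : T -> H) (X : 'I_n -> T) (eta : H) : H :=
  n%:R^-1 *: \sum_(i < n) (ip eta (kfeat (X i)) *: kfeat (X i)).

(* e_1..e_d orthonormal eigenfunctions of A with eigenvalues mu_j, which are
   the d largest: any eigenfunction orthogonal to all e_j has eigenvalue
   at most every mu_j. *)
Definition top_eigenfun (R : realType) (H : lmodType R) (d : nat)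
    (A : H -> H) (ip : H -> H -> R) (e : 'I_d -> H) (mu : 'I_d -> R) :=
  [/\ (forall i j, ip (e i) (e j) = (i == j)%:R),
      (forall j, A (e j) = mu j *: e j) &
      (forall (f : H) (nu : R), f != 0 -> A f = nu *: f ->
          (forall j, ip f (e j) = 0) -> forall j, nu <= mu j)].

Definition proj_onto (R : realType) (H : lmodType R) (d : nat)
    (ip : H -> H -> R) (e : 'I_d -> H) (h : H) : H :=
  \sum_(j < d) (ip h (e j) *: e j).

Definition isometric_iso_onto (R : realType) (H : lmodType R) (d : nat)
    (P : H -> H) (ip : H -> H -> R) (iota : H -> 'cV[R]_d) :=
  let V := fun a => exists h, a = P h in
  [/\ (forall (c : R) a b, V a -> V b -> iota (c *: a + b) = c *: iota a + iota b),
      (forall a, V a -> \sum_(i < d) (iota a i 0) ^+ 2 = ip a a) &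
      (forall v, exists2 a, V a & iota a = v)].

(* Main.v *)
Require Import Defs.
From HB Require Import structures.
From mathcomp Require Import all_boot all_order all_algebra.
From mathcomp Require Import all_classical all_reals all_analysis.
From mathcomp Require Import ring lra.
Import Order.TTheory GRing.Theory Num.Theory.
Import numFieldNormedType.Exports.
Local Open Scope ring_scope.
Set Implicit Arguments.

Lemma colKdiag (R : comPzRingType) m n (M : 'M[R]_(m,n)) (l : 'rV_n) j :
  col j (M *m diag_mx l) = l 0 j *: col j M.
Proof. by apply/matrixP=> i k; rewrite mxE mul_mx_diag !mxE mulrC. Qed.

Lemma core (R : realFieldType) n d (K : 'M[R]_n) (U A : 'M[R]_(n,d)) (s nu : 'rV[R]_d) (rho : R) :
  K^T = K -> 0 < rho ->
  U^T *m U = 1%:M -> K *m U = U *m diag_mx s -> (forall j, 0 < s 0 j) ->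
  (forall (v : 'cV[R]_n) mu, v != 0 -> K *m v = mu *: v -> U^T *m v = 0 -> forall j, mu < s 0 j) ->
  K *m A = A *m diag_mx (rho *: nu) ->
  A^T *m A = diag_mx nu ->
  (forall (v : 'cV[R]_n) c, v != 0 -> K *m v = c *: v -> A^T *m v = 0 -> forall j, c <= rho * nu 0 j) ->
  (forall j, 0 < nu 0 j) /\ A = U *m (U^T *m A).
Proof.
move=> KT rho0 UtU KU s0 hU KA AtA hf.
set S := diag_mx s; set L := diag_mx (rho *: nu).
have [C CE] : {C : 'M[R]_d | C = U^T *m A} by exists (U^T *m A).
rewrite -CE.
have UtK : U^T *m K = S *m U^T.
  by have := congr1 trmx KU; rewrite !trmx_mul KT tr_diag_mx.
have SC : S *m C = C *m L by rewrite CE mulmxA -UtK -mulmxA KA mulmxA.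
have Cent : forall i j, C i j * (s 0 i - rho * nu 0 j) = 0.
  move=> i j; have h := congr1 (fun M : 'M[R]_d => M i j) SC.
  rewrite /= mul_diag_mx mul_mx_diag !mxE in h.
  rewrite mulrBr [C i j * s 0 i]mulrC h subrr //.
have colK : forall (M : 'M[R]_(n,d)) j, col j (K *m M) = K *m col j M.
  by move=> M j; rewrite !colE mulmxA.
have colT : forall m (B : 'M[R]_(m, n)) (M : 'M[R]_(n,d)) j, col j (B *m M) = B *m col j M.
  by move=> m B M j; rewrite !colE mulmxA.
have colj0 : forall m j, col j (0 : 'M[R]_(m,d)) = 0.
  by move=> m j; apply/matrixP=> i k; rewrite !mxE.
have colz : forall (M : 'M[R]_(n,d)), (forall j, col j M = 0) -> M = 0.
  move=> M h; apply/matrixP=> i j; have := congr1 (fun N : 'cV[R]_n => N i 0) (h j).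
  by rewrite !mxE.
have Cz : forall l j, s 0 l != rho * nu 0 j -> C l j = 0.
  move=> l j hne; have := Cent l j; move/eqP; rewrite mulf_eq0 subr_eq0.
  by rewrite (negbTE hne) orbF => /eqP.
case: (boolP [forall j, [exists k, s 0 k <= rho * nu 0 j]]) => [/forallP caseA | caseB].
-
  set Rm := A - U *m C.
  have UtR : U^T *m Rm = 0 by rewrite /Rm mulmxBr mulmxA UtU mul1mx CE subrr.
  have KR : K *m Rm = Rm *m L.
    by rewrite /Rm mulmxBr mulmxBl KA mulmxA KU -mulmxA -/S SC mulmxA.
  have R0 : Rm = 0.
    apply: colz => j; apply/eqP/negPn/negP => hv.
    have := hU _ (rho * nu 0 j) hv.
    rewrite -colK KR colKdiag mxE -colT UtR colj0 => /(_ erefl erefl).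
    have /existsP [k hk] := caseA j.
    by move=> /(_ k); rewrite ltNge hk.
  split; last by apply/eqP; rewrite -subr_eq0 -/Rm R0.
  move=> j; have /existsP [k hk] := caseA j.
  have : 0 < rho * nu 0 j by apply: lt_le_trans hk.
  by rewrite pmulr_rgt0.
-
  have [j0 hj0] : exists j0, forall k, rho * nu 0 j0 < s 0 k.
    move: caseB; rewrite negb_forall => /existsP [j0 hj0]; exists j0 => k.
    move: hj0; rewrite negb_exists => /forallP /(_ k).
    by rewrite -ltNge.
  have Cunit : C \in unitmx.
    rewrite unitmxE unitfE; apply/negP => /det0P [yr yr0 yC].
    have [i0 [k hk]] : exists (i0 : 'I_1) (k : 'I_d), yr i0 k != 0 by apply/matrix0Pn.
    rewrite (ord1 i0) in hk.
    set zr := \row_i (if s 0 i == s 0 k then yr 0 i else 0).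
    have zC : zr *m C = 0.
      apply/matrixP=> i j; rewrite (ord1 i) !mxE.
      case: (eqVneq (s 0 k) (rho * nu 0 j)) => e3.
        have h := congr1 (fun M : 'rV[R]_d => M 0 j) yC; rewrite /= !mxE in h; rewrite -[in RHS]h.
        apply: eq_bigr => l _; rewrite !mxE.
        case: eqP => [e|ne]; first by [].
        by rewrite Cz ?mulr0 ?mul0r //; apply/eqP=> e4; apply: ne; rewrite e4 e3.
      apply: big1 => l _; rewrite !mxE.
      case: eqP => [e|ne]; last by rewrite mul0r.
      by rewrite Cz ?mulr0 // e.
    have zr0 : zr != 0.
      apply/matrix0Pn; exists 0, k; by rewrite !mxE eqxx.
    have := hf (U *m zr^T) (s 0 k).
    have -> : U *m zr^T != 0.
      apply/negP=> /eqP h; move/negP: zr0; apply; apply/eqP.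
      have := congr1 (mulmx U^T) h; rewrite mulmxA UtU mul1mx mulmx0 => h2.
      by rewrite -[zr]trmxK h2 trmx0.
    have -> : K *m (U *m zr^T) = s 0 k *: (U *m zr^T).
      rewrite mulmxA KU -mulmxA scalemxAr; congr (U *m _).
      apply/matrixP=> i j; rewrite mul_diag_mx !mxE.
      by case: eqP => [->|]; rewrite ?mulr0.
    have -> : A^T *m (U *m zr^T) = 0.
      have := congr1 trmx zC; rewrite trmx_mul trmx0 CE trmx_mul trmxK.
      by rewrite mulmxA.
    move=> /(_ isT erefl erefl j0); by rewrite leNgt hj0.
  have nupos : forall j, 0 < nu 0 j.
    move=> j; rewrite ltNge; apply/negP => hle.
    have colA0 : col j A = 0.
      have hs : \sum_l (A l j)^+2 = nu 0 j.
        have h := congr1 (fun M : 'M[R]_d => M j j) AtA.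
        rewrite /= !mxE eqxx mulr1n in h; rewrite -h.
        by apply: eq_bigr => l _; rewrite !mxE expr2.
      have hs0 : \sum_l (A l j)^+2 = 0.
        apply/eqP; rewrite eq_le {1}hs hle /=; apply: sumr_ge0 => l _; exact: sqr_ge0.
      apply/matrixP=> l i; rewrite !mxE; apply/eqP; rewrite -sqrf_eq0; apply/eqP.
      by apply: (psumr_eq0P _ hs0) => // l' _; exact: sqr_ge0.
    have : C *m (delta_mx j 0 : 'cV[R]_d) = 0 by rewrite CE -mulmxA -colE colA0 mulmx0.
    move/(congr1 (mulmx (invmx C))); rewrite mulmxA mulVmx // mul1mx mulmx0.
    move=> /matrixP /(_ j 0); rewrite !mxE !eqxx /= => /eqP; by rewrite oner_eq0.
  set Ni := diag_mx (\row_j (nu 0 j)^-1).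
  have NNi : diag_mx nu *m Ni = 1%:M.
    rewrite /Ni mulmx_diag -diag_const_mx; congr diag_mx.
    by apply/matrixP => i j; rewrite !mxE mulfV // gt_eqF.
  have AtK : A^T *m K = L *m A^T.
    by have := congr1 trmx KA; rewrite !trmx_mul KT tr_diag_mx.
  set Pi := A *m Ni *m A^T.
  have KPi : K *m Pi = Pi *m K.
    rewrite /Pi !mulmxA KA -!mulmxA AtK /L /Ni !mulmxA.
    by rewrite -(mulmxA A (diag_mx (rho *: nu))) diag_mxC mulmxA.
  set Rm := U - Pi *m U.
  have AtR : A^T *m Rm = 0 by rewrite /Rm mulmxBr /Pi !mulmxA AtA NNi mul1mx subrr.
  have KR : K *m Rm = Rm *m S.
    by rewrite /Rm mulmxBr mulmxBl mulmxA KPi -mulmxA KU mulmxA.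
  have R0 : Rm = 0.
    apply: colz => k; apply/eqP/negPn/negP => hv.
    have := hf _ (s 0 k) hv.
    rewrite -colK KR colKdiag -colT AtR colj0 => /(_ erefl erefl j0).
    by rewrite leNgt hj0.
  have [E UE] : exists E : 'M[R]_d, U = A *m E.
    exists (Ni *m A^T *m U); apply/eqP; rewrite -subr_eq0 !mulmxA -/Pi.
    by rewrite -/Rm R0.
  have hEE := UtU; rewrite UE trmx_mul -mulmxA (mulmxA A^T) AtA mulmxA in hEE.
  have h2 : E *m (E^T *m diag_mx nu) = 1%:M by exact: mulmx1C.
  split => //.
  by rewrite CE UE trmx_mul -(mulmxA E^T) AtA -mulmxA h2 mulmx1.
Qed.
Lemma ip_props (R : realType) (H : lmodType R) (ip : H -> H -> R) :
  inner_product ip ->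
  [/\ (forall a b h, ip (a + b) h = ip a h + ip b h), (forall h, ip 0 h = 0),
      (forall c a h, ip (c *: a) h = c * ip a h) & (forall a b, ip a b = ip b a)].
Proof.
move=> [lin [sym _]].
have ipD : forall a b h, ip (a + b) h = ip a h + ip b h.
  by move=> a b h; have := lin 1 a b h; rewrite scale1r mul1r.
have ip0 : forall h, ip 0 h = 0.
  move=> h; have := ipD 0 0 h; rewrite addr0 => hh; lra.
split => //.
by move=> c a h; have := lin c a 0 h; rewrite addr0 ip0 addr0.
Qed.

Lemma ip_sumZ (R : realType) (H : lmodType R) (ip : H -> H -> R) :
  inner_product ip -> forall m (c : 'I_m -> R) (F : 'I_m -> H) h,
  ip (\sum_i c i *: F i) h = \sum_i c i * ip (F i) h.
Proof.
move=> hip m c F h; have [ipD ip0 ipZ _] := ip_props hip.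
rewrite (big_morph (fun a => ip a h) (fun a b => ipD a b h) (ip0 h)).
by apply: eq_bigr => i _; rewrite ipZ.
Qed.

Lemma diag_inv1 (R : fieldType) d (w : 'rV[R]_d) : (forall j, w 0 j != 0) ->
  diag_mx w *m diag_mx (\row_j (w 0 j)^-1) = 1%:M.
Proof.
move=> hw; rewrite mulmx_diag -diag_const_mx; congr diag_mx.
by apply/matrixP => i j; rewrite !mxE mulfV.
Qed.

Lemma diag_inv2 (R : fieldType) d (w : 'rV[R]_d) : (forall j, w 0 j != 0) ->
  diag_mx (\row_j (w 0 j)^-1) *m diag_mx w = 1%:M.
Proof. by move=> hw; rewrite diag_mxC diag_inv1. Qed.
Arguments diag_inv1 {R d w}.
Arguments diag_inv2 {R d w}.

Lemma sum_sq (R : comPzRingType) d (v : 'cV[R]_d) :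
  \sum_i (v i 0)^+2 = (v^T *m v) 0 0.
Proof. by rewrite !mxE; apply: eq_bigr => i _; rewrite !mxE expr2. Qed.


Unset Implicit Arguments.

Theorem lemma15 (R : realType) (T : pseudoMetricType R) (H : lmodType R)
    (ip : H -> H -> R) (kappa : T -> T -> R) (kfeat : T -> H)
    (n d : nat) (X : 'I_n -> T) (rho : R)
    (U : 'M[R]_(n, d)) (s : 'rV[R]_d) (e : 'I_d -> H) (mu : 'I_d -> R) :
  hausdorff_space T -> compact [set: T] ->
  continuous (fun p : T * T => (kappa p.1 p.2 : R)) ->
  (forall x y, 0 <= kappa x y <= 1) ->
  pos_def_kernel kappa ->
  inner_product ip -> rkhs_feature ip kappa kfeat ->
  0 < rho < 1 -> (0 < d)%N ->
  top_eigen (gram_K rho kappa X) U s ->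
  top_eigenfun (KHn ip kfeat X) ip e mu ->
  exists iota : H -> 'cV[R]_d,
    isometric_iso_onto (proj_onto ip e) ip iota /\
    forall x : T,
      (Num.sqrt rho)^-1 *: (mp_pinv (Ztilde U s) *m Exi rho kappa X x)
      = iota (proj_onto ip e (kfeat x)).
Proof.
move=> _ _ _ _ [ksym _] hip [rep _] /andP[rho0 rho1] d0 [UtU KU s0 _ hU] [eorth eeig emax].
have [ipD ip0 ipZ ipC] := ip_props hip.
have ipS := ip_sumZ hip.
have n0 : (0 < n)%N.
  rewrite lt0n; apply/negP=> /eqP n0; subst n.
  have := congr1 (fun M : 'M[R]_d => M (Ordinal d0) (Ordinal d0)) UtU.
  by rewrite /= !mxE big_ord0 eqxx /= => /eqP; rewrite eq_sym oner_eq0.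
have nR : n%:R != 0 :> R by rewrite pnatr_eq0 -lt0n.
have rhoR : rho != 0 by apply: lt0r_neq0.
have [A AE0] : {A : 'M[R]_(n,d) | A = \matrix_(i, j) ip (e j) (kfeat (X i))}.
  by exists (\matrix_(i, j) ip (e j) (kfeat (X i))).
have Aij : forall i j, A i j = ip (e j) (kfeat (X i)) by move=> i j; rewrite AE0 mxE.
set nu : 'rV[R]_d := \row_j (n%:R * mu j).
have E0 : forall j h, \sum_l A l j * ip (kfeat (X l)) h = n%:R * mu j * ip (e j) h.
  move=> j h; have := congr1 (fun a => ip a h) (eeig j); rewrite /KHn /= ipZ ipS ipZ => hh.
  rewrite -mulrA -hh mulrA mulfV // mul1r; apply: eq_bigr => l _; by rewrite Aij.
set K := gram_K rho kappa X.
have KT : K^T = K by apply/matrixP=> i j; rewrite !mxE ksym.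
have KA : K *m A = A *m diag_mx (rho *: nu).
  apply/matrixP=> l j; rewrite mul_mx_diag !mxE.
  transitivity (rho * (n%:R * mu j * ip (e j) (kfeat (X l)))); last by rewrite Aij; ring.
  rewrite -E0 mulr_sumr; apply: eq_bigr => i _; rewrite rep ksym !mxE; ring.
have AtA : A^T *m A = diag_mx nu.
  apply/matrixP=> i j; rewrite !mxE.
  have hh := E0 j (e i); rewrite eorth in hh.
  transitivity (n%:R * mu j * (j == i)%:R).
    rewrite -hh; apply: eq_bigr => l _; by rewrite !mxE mulrC ipC -Aij.
  by case: (eqVneq i j) => [->|ne]; rewrite /= ?mulr1 ?mulr1n ?mulr0 ?mulr0n.
have nuge : forall j, 0 <= nu 0 j.
  move=> j; have := congr1 (fun M : 'M[R]_d => M j j) AtA.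
  rewrite /= [in RHS]mxE eqxx mulr1n => <-; rewrite mxE.
  by apply: sumr_ge0 => l _; rewrite mxE -expr2 sqr_ge0.
have hf : forall (v : 'cV[R]_n) c, v != 0 -> K *m v = c *: v -> A^T *m v = 0 ->
    forall j, c <= rho * nu 0 j.
  move=> v c v0 Kv Atv j.
  case: (lerP c 0) => hc.
    by apply: le_trans hc _; apply: mulr_ge0; [exact: ltW|exact: nuge].
  set f := \sum_i (v i 0) *: kfeat (X i).
  have fk : forall h, ip f h = \sum_i v i 0 * ip (kfeat (X i)) h by move=> h; exact: ipS.
  have Gv : forall i, \sum_l v l 0 * kappa (X l) (X i) = c / rho * v i 0.
    move=> i; have := congr1 (fun M : 'cV[R]_n => M i 0) Kv; rewrite !mxE => hh.
    apply: (mulfI rhoR); have -> : rho * (c / rho * v i 0) = c * v i 0 by field; rewrite ?rhoR.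
    rewrite -hh mulr_sumr.
    by apply: eq_bigr => l _; rewrite !mxE ksym; ring.
  have KHf : KHn ip kfeat X f = (n%:R^-1 * (c/rho)) *: f.
    rewrite /KHn -scalerA; congr (_ *: _); rewrite /f scaler_sumr; apply: eq_bigr => i _.
    rewrite fk; under eq_bigr do rewrite rep.
    by rewrite Gv scalerA.
  have forth : forall j, ip f (e j) = 0.
    move=> j'; rewrite fk; have hh := congr1 (fun M : 'cV[R]_d => M j' 0) Atv.
    rewrite /= !mxE in hh; rewrite -[in RHS]hh.
    apply: eq_bigr => l _; by rewrite !mxE ipC -Aij mulrC.
  have fnz : f != 0.
    apply/negP => /eqP f0.
    have : ip f f = c / rho * \sum_i (v i 0)^+2.
      rewrite fk mulr_sumr; apply: eq_bigr => i _; rewrite ipC fk.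
      under eq_bigr do rewrite rep.
      by rewrite Gv expr2 mulrCA.
    rewrite f0 ip0 => /esym/eqP; rewrite mulf_eq0 mulf_eq0 invr_eq0 (negbTE rhoR).
    rewrite (gt_eqF hc) /= => /eqP hs.
    move/negP: v0; apply; apply/eqP/matrixP => i k; rewrite (ord1 k) mxE.
    apply/eqP; rewrite -sqrf_eq0; apply/eqP.
    by apply: (psumr_eq0P _ hs) => // l' _; exact: sqr_ge0.
  have hh := emax f _ fnz KHf forth j; rewrite mxE.
  have e1 : c = rho * (n%:R * (n%:R^-1 * (c / rho))) by field; rewrite ?nR ?rhoR.
  rewrite e1; apply: ler_wpM2l; first exact: ltW.
  apply: ler_wpM2l => //; exact: ler0n.
have [nupos AE] := core KT rho0 UtU KU s0 hU KA AtA hf.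
have [C CE] : {C : 'M[R]_d | C = U^T *m A} by exists (U^T *m A).
rewrite -CE in AE.
have CtC : C^T *m C = diag_mx nu.
  by rewrite -AtA AE trmx_mul -mulmxA (mulmxA U^T) UtU mul1mx.
have UtK : U^T *m K = diag_mx s *m U^T.
  by have := congr1 trmx KU; rewrite !trmx_mul KT tr_diag_mx.
have SC : diag_mx s *m C = C *m diag_mx (rho *: nu).
  by rewrite CE mulmxA -UtK -mulmxA KA mulmxA.
have sne : forall j, s 0 j != 0 by move=> j; apply: lt0r_neq0.
have nune : forall j, nu 0 j != 0 by move=> j; apply: lt0r_neq0.
have lne : forall j, (rho *: nu) 0 j != 0.
  by move=> j; rewrite mxE mulf_neq0.
set Sinv := diag_mx (\row_j (s 0 j)^-1).
set Li := diag_mx (\row_j ((rho *: nu) 0 j)^-1).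
have SinvC : Sinv *m C = C *m Li.
  rewrite -[Sinv *m C]mulmx1 -(diag_inv1 lne) mulmxA -(mulmxA Sinv) -SC.
  by rewrite mulmxA (diag_inv2 sne) mul1mx.
set Sih := diag_mx (\row_j (Num.sqrt (s 0 j))^-1).
have sqne : forall j, Num.sqrt (s 0 j) != 0.
  by move=> j; apply: lt0r_neq0; rewrite sqrtr_gt0.
have SihSih : Sih *m Sih = Sinv.
  rewrite mulmx_diag; congr diag_mx; apply/matrixP => i j; rewrite !mxE.
  by rewrite -invfM -expr2 sqr_sqrtr // ltW.
set Q := Num.sqrt rho *: (Sih *m C).
have QT : Q^T = Num.sqrt rho *: (C^T *m Sih).
  by rewrite /Q linearZ /= trmx_mul tr_diag_mx.
have QtQ : Q^T *m Q = 1%:M.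
  rewrite QT /Q -scalemxAl -scalemxAr scalerA.
  rewrite -expr2 sqr_sqrtr ?(ltW rho0) // -mulmxA (mulmxA Sih) SihSih SinvC mulmxA CtC.
  rewrite /Li mulmx_diag; apply/matrixP => i j; rewrite !mxE.
  case: (eqVneq i j) => [->|ne] /=; last by rewrite mulr0n mulr0.
  have := nune j; rewrite mxE => hn.
  by rewrite mulr1n; field; rewrite nR rhoR !andbT; move: hn; rewrite mulf_eq0 negb_or => /andP[].
have QQt : Q *m Q^T = 1%:M by exact: mulmx1C.
set Ni := diag_mx (\row_j (nu 0 j)^-1).
have CNiCt : C *m Ni *m C^T = 1%:M.
  by apply: mulmx1C; rewrite mulmxA CtC (diag_inv1 nune).
pose co (a : H) : 'cV[R]_d := \col_j ip a (e j).
have ipSe : forall (c : 'cV[R]_d) i, ip (\sum_l (c l 0) *: e l) (e i) = c i 0.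
  move=> c i; rewrite ipS.
  under eq_bigr do rewrite eorth.
  rewrite (bigD1 i) //= eqxx mulr1 big1 ?addr0 // => l /negbTE ->; by rewrite mulr0.
have coS : forall c : 'cV[R]_d, co (\sum_l (c l 0) *: e l) = c.
  by move=> c; apply/matrixP => i j; rewrite (ord1 j) mxE ipSe.
have Pco : forall h, proj_onto ip e h = \sum_l ((co h) l 0) *: e l.
  by move=> h; apply: eq_bigr => l _; rewrite mxE.
have coP : forall h, co (proj_onto ip e h) = co h by move=> h; rewrite Pco coS.
exists (fun a => Q *m co a); split; first split.
- move=> c a b _ _.
  have -> : co (c *: a + b) = c *: co a + co b.
    by apply/matrixP => i j; rewrite !mxE ipD ipZ.
  by rewrite mulmxDr scalemxAr.
- move=> a [h ->]; rewrite sum_sq trmx_mul -mulmxA (mulmxA Q^T) QtQ mul1mx -sum_sq.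
  rewrite coP {2}Pco ipS; apply: eq_bigr => i _; rewrite expr2 ipC.
  by rewrite [ip (e i) (\sum_l _ )]ipC ipSe [ip (e i) h]ipC /co mxE.
- move=> v; exists (\sum_l ((Q^T *m v) l 0) *: e l).
    by exists (\sum_l ((Q^T *m v) l 0) *: e l); rewrite Pco coS.
  by rewrite coS mulmxA QQt mul1mx.
move=> x; rewrite coP.
set g : 'cV[R]_n := \col_i kappa x (X i).
have Atg : A^T *m g = diag_mx nu *m co (kfeat x).
  apply/matrixP => j i; rewrite (ord1 i) mul_diag_mx !mxE.
  rewrite ipC -E0; apply: eq_bigr => l _; by rewrite !mxE rep ksym.
have Cw : C *m co (kfeat x) = U^T *m g.
  rewrite -[co _]mul1mx -(diag_inv2 nune) -/Ni -mulmxA -Atg AE trmx_mul !mulmxA.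
  by rewrite CNiCt mul1mx.
have Exg : Exi rho kappa X x = rho *: g by apply/matrixP => i j; rewrite !mxE.
have pinv : mp_pinv (Ztilde U s) = Sih *m U^T.
  have ZZ : (Ztilde U s)^T *m Ztilde U s = diag_mx s.
    rewrite /Ztilde trmx_mul tr_diag_mx -mulmxA (mulmxA U^T) UtU mul1mx mulmx_diag.
    congr diag_mx; apply/matrixP => i j; rewrite !mxE (ord1 i) -expr2 sqr_sqrtr //.
    exact: ltW.
  have Su : diag_mx s \in unitmx by have [] := mulmx1_unit (diag_inv1 sne).
  have iS : invmx (diag_mx s) = Sinv.
    by rewrite -[invmx _]mulmx1 -(diag_inv1 sne) mulmxA mulVmx // mul1mx.
  rewrite /mp_pinv ZZ iS /Ztilde trmx_mul tr_diag_mx mulmxA mulmx_diag.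
  congr (diag_mx _ *m _); apply/matrixP => i j; rewrite !mxE.
  rewrite -{1}(sqr_sqrtr (ltW (s0 j))) expr2 invfM -mulrA mulVf // mulr1 //.
rewrite pinv Exg /Q -scalemxAl -(mulmxA Sih C) Cw -!scalemxAr scalerA.
congr (_ *: _).
have := sqr_sqrtr (ltW rho0); rewrite expr2 => hr.
rewrite -{2}hr mulrA mulVf ?mul1r //; apply: lt0r_neq0; by rewrite sqrtr_gt0.
by rewrite mulmxA.
Qed.
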